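(* Let $V$ be a complex vector space of finite dimension $N$. Let $F\in \mathrm{End}(V\otimes V)$ be an involutive symmetry and let $R=R(q)\in \mathrm{End}(V\otimes V)$ be a family of Hecke symmetries depending analytically on $q$ in a neighbourhood of $q=1$, such that $R(1)=F$ and, for each $q$, the braidings $R(q)$ and $F$ are compatible. Put $q=e^h$ and expand $$\mathcal{R}(q):=R(q)\,F = I+h\,r+O(h^2),\qquad r\in \mathrm{End}(V\otimes V).$$ Then (1) $r_{\overline{12}}+r_{\overline{21}}=2F$; (2) $[r_{\overline{12}}, r_{\overline{13}}]+[r_{\overline{12}}, r_{\overline{23}}]+[r_{\overline{13}}, r_{\overline{23}}]=0$ in $\mathrm{End}(V^{\otimes 3})$.
   Context: A braiding is an invertible $R\in\mathrm{End}(V\otimes V)$ with $(R\otimes I)(I\otimes R)(R\otimes I)=(I\otimes R)(R\otimes I)(I\otimes R)$. It is an involutive symmetry if $R^2=I$ and a Hecke symmetry if $(R-qI)(R+q^{-1}I)=0$ with $q\neq\pm1$. For $X\in\mathrm{End}(V\otimes V)$, $X_{12}=X\otimes I$, $X_{23}=I\otimes X$ in $\mathrm{End}(V^{\otimes 3})$. Two braidings $R,F$ are compatible if $R_{12}F_{23}F_{12}=F_{23}F_{12}R_{23}$ and $R_{23}F_{12}F_{23}=F_{12}F_{23}R_{12}$. Overlined indices (transfer by $F$): for $X\in\mathrm{End}(V\otimes V)$, $X_{\overline{12}}=X_{12}$, $X_{\overline{13}}=F_{23}X_{12}F_{23}^{-1}$, $X_{\overline{23}}=F_{12}F_{23}X_{12}F_{23}^{-1}F_{12}^{-1}$,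 and (since $F$ is involutive) $X_{\overline{21}}=F\,X\,F$ (acting on $V\otimes V$). $[A,B]=AB-BA$. *)

(* Defs.v *)
(* complex numbers are R[i] (real_closed.complex) over an
   abstract R : realType (MathComp-Analysis); End(V (x) V) for V = C^N is the
   type of (N*N)x(N*N) matrices, the tensor product is mxtens' Kronecker
   product [*t] (index (i,j) |-> i*n + j, first factor major). *)
From HB Require Import structures.
From mathcomp Require Import all_boot all_order all_algebra.
From mathcomp Require Import complex mxtens.
From mathcomp Require Import reals sequences exp trigo.
Set Implicit Arguments.
Unset Strict Implicit.
Unset Printing Implicit Defensive.
Import Order.TTheory GRing.Theory Num.Theory.
Local Open Scope ring_scope.

Section Defs.
Variable R : realType.
Local Notation C := R[i].
Variable N : nat.

Notation End2 := 'M[C]_(N * N).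
Notation End3 := 'M[C]_(N * N * N).

Definition leg12 (X : End2) : End3 := X *t (1%:M : 'M[C]_N).
(* X_23 = I (x) X, transported along the associativity N*(N*N) = (N*N)*N of
   index sets (the transport preserves the numerical index i*N*N + j*N + k) *)
Definition leg23 (X : End2) : End3 :=
  castmx (mulnA N N N, mulnA N N N) ((1%:M : 'M[C]_N) *t X).

Definition braiding (X : End2) : Prop :=
  X \in unitmx /\
  leg12 X *m leg23 X *m leg12 X = leg23 X *m leg12 X *m leg23 X.

Definition involutive_symmetry (X : End2) : Prop :=
  braiding X /\ X *m X = 1%:M.

Definition hecke_symmetry (q : C) (X : End2) : Prop :=
  braiding X /\ q != 1 /\ q != -1 /\
  (X - q%:M) *m (X + q^-1%:M) = 0.

Definition compatible (X Y : End2) : Prop :=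
  leg12 X *m leg23 Y *m leg12 Y = leg23 Y *m leg12 Y *m leg23 X /\
  leg23 X *m leg12 Y *m leg23 Y = leg12 Y *m leg23 Y *m leg12 X.

Definition ov12 (F X : End2) : End3 := leg12 X.
Definition ov13 (F X : End2) : End3 :=
  leg23 F *m leg12 X *m invmx (leg23 F).
Definition ov23 (F X : End2) : End3 :=
  leg12 F *m leg23 F *m leg12 X *m invmx (leg23 F) *m invmx (leg12 F).
Definition ov21 (F X : End2) : End2 := F *m X *m F.

End Defs.

Definition commmx (n : nat) (R : pzRingType) (A B : 'M[R]_n) : 'M[R]_n :=
  A *m B - B *m A.

Definition expC (R : realType) (z : R[i]) : R[i] :=
  Complex (expR (complex.Re z) * cos (complex.Im z))
          (expR (complex.Re z) * sin (complex.Im z)).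

Definition analytic_on_disc (R : realType) (n : nat)
    (f : R[i] -> 'M[R[i]]_n) (a rho : R[i]) : Prop :=
  exists c : nat -> 'M[R[i]]_n,
    forall z : R[i], `|z - a| < rho -> forall i j : 'I_n,
      forall e : R[i], 0 < e -> exists M : nat, forall m : nat, (M <= m)%N ->
        `| \sum_(k < m) c k i j * (z - a) ^+ k - f z i j | < e.

Definition bigO_h2 (R : realType) (n : nat) (g : R[i] -> 'M[R[i]]_n) : Prop :=
  exists K delta : R[i], 0 < delta /\
    forall h : R[i], `|h| < delta -> forall i j : 'I_n,
      `|g h i j| <= K * `|h| ^+ 2.

(* Main.v *)
Require Import Defs.
From HB Require Import structures.
From mathcomp Require Import all_boot all_order all_algebra.
From mathcomp Require Import complex mxtens.
From mathcomp Require Import reals sequences exp trigo.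
From mathcomp Require Import ring lra.
Import Order.TTheory GRing.Theory Num.Theory.
Local Open Scope ring_scope.
Set Implicit Arguments.
Unset Strict Implicit.

Section Norm.
Variable R : realType.
Local Notation C := R[i].
Local Notation nc := (@Normc.normc R).

Lemma nc_ge0 (z : C) : 0 <= nc z.
Proof. by case: z => a b; rewrite /Normc.normc sqrtr_ge0. Qed.

Lemma normC_nc (z : C) : `|z| = (nc z)%:C%C.
Proof. by case: z => a b; rewrite normc_def. Qed.

Definition mn {m n} (A : 'M[C]_(m,n)) : R := \sum_i \sum_j nc (A i j).

Lemma mn_ge0 m n (A : 'M[C]_(m,n)) : 0 <= mn A.
Proof. by apply: sumr_ge0 => i _; apply: sumr_ge0 => j _; apply: nc_ge0. Qed.

Lemma mnD m n (A B : 'M[C]_(m,n)) : mn (A + B) <= mn A + mn B.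
Proof.
rewrite /mn -big_split /=; apply: ler_sum => i _.
rewrite -big_split /=; apply: ler_sum => j _; rewrite mxE; exact: le_normcD.
Qed.

Lemma mnN m n (A : 'M[C]_(m,n)) : mn (- A) = mn A.
Proof. by apply: eq_bigr => i _; apply: eq_bigr => j _; rewrite mxE normcN. Qed.

Lemma mnB m n (A B : 'M[C]_(m,n)) : mn (A - B) <= mn A + mn B.
Proof. by rewrite -(@mnN _ _ B); apply: mnD. Qed.

Lemma mnZ m n c (A : 'M[C]_(m,n)) : mn (c *: A) = nc c * mn A.
Proof.
rewrite /mn mulr_sumr; apply: eq_bigr => i _; rewrite mulr_sumr.
by apply: eq_bigr => j _; rewrite mxE Normc.normcM.
Qed.

Lemma entry_le m n (A : 'M[C]_(m,n)) i j : nc (A i j) <= mn A.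
Proof.
rewrite /mn (bigD1 i) //= (bigD1 j) //= -addrA lerDl.
apply: addr_ge0; first by apply: sumr_ge0 => k _; apply: nc_ge0.
by apply: sumr_ge0 => k _; apply: sumr_ge0 => l _; apply: nc_ge0.
Qed.

Lemma mn_bound m n (A : 'M[C]_(m,n)) c :
  (forall i j, nc (A i j) <= c) -> mn A <= (m * n)%:R * c.
Proof.
move=> H; rewrite /mn.
apply: (@le_trans _ _ (\sum_(i < m) \sum_(j < n) c)).
  by apply: ler_sum => i _; apply: ler_sum => j _.
by rewrite !sumr_const !card_ord -mulrnA mulr_natl mulnC.
Qed.

Lemma mn0 m n (A : 'M[C]_(m,n)) : mn A = 0 -> A = 0.
Proof.
move=> h; apply/matrixP => i j; rewrite mxE.
apply: Normc.eq0_normc; apply/eqP; rewrite eq_le nc_ge0 andbT -h; exact: entry_le.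
Qed.

Lemma nc_sum n (f : 'I_n -> C) : nc (\sum_k f k) <= \sum_k nc (f k).
Proof.
elim/big_ind2: _ => //; first by rewrite Normc.normc0.
by move=> a b c d h1 h2; apply: le_trans (le_normcD _ _) (lerD h1 h2).
Qed.

Lemma mnM m n p (A : 'M[C]_(m,n)) (B : 'M[C]_(n,p)) : mn (A *m B) <= mn A * mn B.
Proof.
rewrite /mn mulr_suml.
apply: ler_sum => i _.
apply: (@le_trans _ _ (\sum_j \sum_k nc (A i k) * nc (B k j))).
  apply: ler_sum => j _; rewrite mxE.
  apply: le_trans; first exact: nc_sum.
  by apply: ler_sum => k _; rewrite Normc.normcM.
rewrite exchange_big /= mulr_suml; apply: ler_sum => k _.
rewrite -mulr_sumr; apply: ler_wpM2l; first exact: nc_ge0.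
rewrite (bigD1 k) //= lerDl; apply: sumr_ge0 => l _; apply: sumr_ge0 => j _; exact: nc_ge0.
Qed.
End Norm.

Section Legs.
Variable R : realType.
Local Notation C := R[i].
Local Notation nc := (@Normc.normc R).
Variable N : nat.

Lemma cast_mulmx m m' (e : m = m') (A B : 'M[C]_m) :
  castmx (e, e) (A *m B) = castmx (e, e) A *m castmx (e, e) B.
Proof. by case: m' / e. Qed.

Lemma cast_1 m m' (e : m = m') : castmx (e, e) (1%:M : 'M[C]_m) = 1%:M.
Proof. by case: m' / e. Qed.

Lemma tens11 m n : (1%:M : 'M[C]_m) *t (1%:M : 'M[C]_n) = 1%:M.
Proof.
apply/matrixP => i j.
case: (mxtens_indexP i) => i0 i1; case: (mxtens_indexP j) => j0 j1.
rewrite tensmxE !mxE (inj_eq (can_inj (@mxtens_indexK m n))) xpair_eqE.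
by case: (i0 == j0); case: (i1 == j1); rewrite ?mulr1 ?mulr0 ?mul0r.
Qed.

Lemma leg12M (X Y : 'M[C]_(N * N)) : leg12 (X *m Y) = leg12 X *m leg12 Y.
Proof. by rewrite /leg12 tensmx_mul mulmx1. Qed.

Lemma leg23M (X Y : 'M[C]_(N * N)) : leg23 (X *m Y) = leg23 X *m leg23 Y.
Proof. by rewrite /leg23 -cast_mulmx tensmx_mul mulmx1. Qed.

Lemma leg12_1 : leg12 (1%:M : 'M[C]_(N * N)) = 1%:M.
Proof. by rewrite /leg12 tens11. Qed.

Lemma leg23_1 : leg23 (1%:M : 'M[C]_(N * N)) = 1%:M.
Proof. by rewrite /leg23 tens11 cast_1. Qed.

Lemma leg12D (X Y : 'M[C]_(N * N)) : leg12 (X + Y) = leg12 X + leg12 Y.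
Proof. by apply/matrixP => i j; rewrite !mxE mulrDl. Qed.

Lemma leg23D (X Y : 'M[C]_(N * N)) : leg23 (X + Y) = leg23 X + leg23 Y.
Proof. by apply/matrixP => i j; rewrite /leg23 !(castmxE, mxE) mulrDr. Qed.

Lemma leg12Z c (X : 'M[C]_(N * N)) : leg12 (c *: X) = c *: leg12 X.
Proof. by apply/matrixP => i j; rewrite !mxE mulrA. Qed.

Lemma leg23Z c (X : 'M[C]_(N * N)) : leg23 (c *: X) = c *: leg23 X.
Proof. by apply/matrixP => i j; rewrite /leg23 !(castmxE, mxE) mulrCA. Qed.

Lemma leg12N (X : 'M[C]_(N * N)) : leg12 (- X) = - leg12 X.
Proof. by rewrite -scaleN1r leg12Z scaleN1r. Qed.

Lemma leg23N (X : 'M[C]_(N * N)) : leg23 (- X) = - leg23 X.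
Proof. by rewrite -scaleN1r leg23Z scaleN1r. Qed.

Lemma nc_delta m (a b : 'I_m) : nc ((1%:M : 'M[C]_m) a b) <= 1.
Proof. by rewrite mxE; case: (a == b); rewrite ?Normc.normc1 ?Normc.normc0. Qed.

Lemma nc_mul_delta (x d : C) : nc d <= 1 -> nc (x * d) <= nc x.
Proof.
move=> h; rewrite Normc.normcM -[X in _ <= X]mulr1.
by apply: ler_wpM2l => //; apply: nc_ge0.
Qed.

Lemma mn_leg12 (X : 'M[C]_(N * N)) : mn (leg12 X) <= (N * N * N * (N * N * N))%:R * mn X.
Proof.
apply: mn_bound => i j; rewrite /leg12 mxE.
by apply: le_trans (entry_le _ _ _); apply: nc_mul_delta; apply: nc_delta.
Qed.

Lemma mn_leg23 (X : 'M[C]_(N * N)) : mn (leg23 X) <= (N * N * N * (N * N * N))%:R * mn X.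
Proof.
apply: mn_bound => i j; rewrite /leg23 castmxE mxE mulrC.
by apply: le_trans (entry_le _ _ _); apply: nc_mul_delta; apply: nc_delta.
Qed.
End Legs.
Lemma ybe_abs (C : comNzRingType) n (a b f g : 'M[C]_n) :
  f *m f = 1%:M -> g *m g = 1%:M -> f *m g *m f = g *m f *m g ->
  a *m b *m a = b *m a *m b -> a *m g *m f = g *m f *m b ->
  b *m f *m g = f *m g *m a ->
  (a *m f) *m (g *m (a *m f) *m g) *m ((f *m g) *m (a *m f) *m (g *m f)) =
  ((f *m g) *m (a *m f) *m (g *m f)) *m (g *m (a *m f) *m g) *m (a *m f).
Proof.
move=> hff hgg hfgf haba hc1 hc2.
have ff Z : f *m (f *m Z) = Z by rewrite mulmxA hff mul1mx.
have gg Z : g *m (g *m Z) = Z by rewrite mulmxA hgg mul1mx.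
have fgf Z : f *m (g *m (f *m Z)) = g *m (f *m (g *m Z)) by rewrite !mulmxA hfgf.
have aba Z : a *m (b *m (a *m Z)) = b *m (a *m (b *m Z)) by rewrite !mulmxA haba.
have c1 Z : a *m (g *m (f *m Z)) = g *m (f *m (b *m Z)) by rewrite !mulmxA hc1.
have c2 Z : b *m (f *m (g *m Z)) = f *m (g *m (a *m Z)) by rewrite !mulmxA hc2.
rewrite -[LHS]mulmx1 -[RHS]mulmx1 -!mulmxA.
rewrite -[f *m (g *m (a *m (f *m (g *m (f *m 1%:M)))))]c2 fgf gg ff.
rewrite -[in RHS]c2 [in RHS]fgf [in RHS]gg [in RHS]ff [in RHS]gg -[in RHS]c2.
rewrite -[in LHS]c2 [in LHS]fgf [in LHS]gg -[in LHS]c1 [in LHS]aba -[in LHS]fgf.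
by [].
Qed.

Lemma ac3 (V : zmodType) (a a' b b' c c' : V) :
  (a + a') + (b + b') + (c + c') = (a + b + c) + (a' + b' + c').
Proof. by rewrite [(a + a') + _]addrACA [LHS]addrACA. Qed.

Lemma eqle (T : numDomainType) (x y : T) : x = y -> x <= y.
Proof. by move->. Qed.

Section Comm.
Variable R : realType.
Local Notation C := R[i].
Local Notation nc := (@Normc.normc R).
Variable n : nat.
Implicit Types p q s u w x y z a b c : 'M[C]_n.

Lemma commD1 p q w : commmx (p + q) w = commmx p w + commmx q w.
Proof. by rewrite /commmx mulmxDl mulmxDr opprD addrACA. Qed.

Lemma commD2 p q w : commmx w (p + q) = commmx w p + commmx w q.
Proof. by rewrite /commmx mulmxDl mulmxDr opprD addrACA. Qed.

Lemma commZZ (k l : C) p q : commmx (k *: p) (l *: q) = (k * l) *: commmx p q.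
Proof.
by rewrite /commmx -!scalemxAl -!scalemxAr !scalerA scalerBr [l * k]mulrC.
Qed.

Lemma comm_1D x y : commmx (1%:M + x) (1%:M + y) = commmx x y.
Proof.
rewrite /commmx !mulmxDl !mulmxDr !mul1mx !mulmx1.
rewrite [1%:M + y + _]addrACA [(1%:M + x) + _]addrC addrKA.
by rewrite [y + _]addrC addrKA.
Qed.

Lemma comm_tele p q s : p *m q *m s - s *m q *m p =
  commmx p q *m s + q *m commmx p s + commmx q s *m p.
Proof.
rewrite /commmx mulmxBl mulmxBr mulmxBl !mulmxA.
by rewrite !subrKA.
Qed.

Definition cyb p q s := commmx p q + commmx p s + commmx q s.

Lemma mn_comm p q : mn (commmx p q) <= 2 * (mn p * mn q).
Proof.
apply: le_trans (mnB _ _) _; rewrite mulr2n mulrDl mul1r.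
by apply: lerD; apply: le_trans (mnM _ _) _; rewrite // mulrC.
Qed.

Lemma cyb_id x y z :
  (1%:M + x) *m (1%:M + y) *m (1%:M + z) = (1%:M + z) *m (1%:M + y) *m (1%:M + x) ->
  cyb x y z = - (commmx x y *m z + y *m commmx x z + commmx y z *m x).
Proof.
move=> /eqP; rewrite -subr_eq0 comm_tele !comm_1D.
rewrite /cyb; move: (commmx x y) (commmx x z) (commmx y z) => cxy cxz cyz.
rewrite [cxy *m _]mulmxDr [cyz *m _]mulmxDr [_ *m cxz]mulmxDl !mulmx1 !mul1mx.
by rewrite ac3 addr_eq0 => /eqP.
Qed.

Lemma mnMb m k l (p : 'M[C]_(m,k)) (q : 'M[C]_(k,l)) P Q :
  mn p <= P -> mn q <= Q -> mn (p *m q) <= P * Q.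
Proof. by move=> h1 h2; apply: le_trans (mnM _ _) (ler_pM (mn_ge0 _) (mn_ge0 _) h1 h2). Qed.

Lemma mnCb p q P Q : mn p <= P -> mn q <= Q -> mn (commmx p q) <= 2 * (P * Q).
Proof.
move=> h1 h2; apply: le_trans (mn_comm _ _) _; apply: ler_wpM2l => //.
exact: ler_pM (mn_ge0 _) (mn_ge0 _) h1 h2.
Qed.

Lemma mnZb m l (k : C) (p : 'M[C]_(m,l)) P : mn p <= P -> mn (k *: p) <= nc k * P.
Proof. by move=> h; rewrite mnZ; apply: ler_wpM2l => //; apply: nc_ge0. Qed.

Lemma mnZb2 m l (k : C) (p : 'M[C]_(m,l)) K P : nc k <= K -> mn p <= P -> mn (k *: p) <= K * P.
Proof. by move=> h1 h2; rewrite mnZ; apply: ler_pM => //; [apply: nc_ge0|apply: mn_ge0]. Qed.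

Lemma mnDb m l (p q : 'M[C]_(m,l)) P Q : mn p <= P -> mn q <= Q -> mn (p + q) <= P + Q.
Proof. by move=> h1 h2; apply: le_trans (mnD _ _) (lerD h1 h2). Qed.

Lemma pair_id (h : C) a b Ga Gb :
  commmx (h *: a + Ga) (h *: b + Gb) =
  (h * h) *: commmx a b + (commmx (h *: a) Gb + commmx Ga (h *: b + Gb)).
Proof. rewrite commD1 commD2 [commmx (h *: a) (h *: b)]commZZ; exact: esym (addrA _ _ _). Qed.

Lemma cyb_small a b c Ga Gb Gc (h : C) (t M : R) :
  0 < t -> t <= 1 -> nc h = t ->
  mn a <= M -> mn b <= M -> mn c <= M ->
  mn Ga <= M * t ^+ 2 -> mn Gb <= M * t ^+ 2 -> mn Gc <= M * t ^+ 2 ->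
  (1%:M + (h *: a + Ga)) *m (1%:M + (h *: b + Gb)) *m (1%:M + (h *: c + Gc)) =
  (1%:M + (h *: c + Gc)) *m (1%:M + (h *: b + Gb)) *m (1%:M + (h *: a + Ga)) ->
  mn (cyb a b c) <= (48 * M ^+ 3 + 18 * M ^+ 2) * t.
Proof.
move=> t0 t1 nh ha hb hc hGa hGb hGc /cyb_id E.
have M0 : 0 <= M by apply: le_trans (mn_ge0 _) ha.
have tt : M * t ^+ 2 <= M * t.
  apply: ler_wpM2l => //; rewrite expr2 -[X in _ <= X]mulr1; apply: ler_wpM2l => //.
  exact: ltW.
have bx u Gu : mn u <= M -> mn Gu <= M * t ^+ 2 -> mn (h *: u + Gu) <= 2 * M * t.
  move=> h1 h2; apply: le_trans (mnDb (mnZb h h1) (le_trans h2 tt)) _.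
  by rewrite nh; apply: eqle; ring.
have bha u : mn u <= M -> mn (h *: u) <= t * M by move=> h1; rewrite -nh; apply: mnZb.
pose Rem := (commmx (h *: a) Gb + commmx Ga (h *: b + Gb)) +
  (commmx (h *: a) Gc + commmx Ga (h *: c + Gc)) +
  (commmx (h *: b) Gc + commmx Gb (h *: c + Gc)).
have E1 : cyb (h *: a + Ga) (h *: b + Gb) (h *: c + Gc) = (h * h) *: cyb a b c + Rem.
  rewrite /cyb (pair_id h a b Ga Gb) (pair_id h a c Ga Gc) (pair_id h b c Gb Gc).
  rewrite (ac3 ((h * h) *: commmx a b) (commmx (h *: a) Gb + commmx Ga (h *: b + Gb))
     ((h * h) *: commmx a c) (commmx (h *: a) Gc + commmx Ga (h *: c + Gc))
     ((h * h) *: commmx b c) (commmx (h *: b) Gc + commmx Gb (h *: c + Gc))).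
  by rewrite (scalerDr (h * h) (commmx a b + commmx a c) (commmx b c))
    (scalerDr (h * h) (commmx a b) (commmx a c)).
have hE : (h * h) *: (commmx a b + commmx a c + commmx b c) =
   - (commmx (h *: a + Ga) (h *: b + Gb) *m (h *: c + Gc) +
      (h *: b + Gb) *m commmx (h *: a + Ga) (h *: c + Gc) +
      commmx (h *: b + Gb) (h *: c + Gc) *m (h *: a + Ga)) - Rem.
  by rewrite -E E1 addrK.
have bQ : mn (commmx (h *: a + Ga) (h *: b + Gb) *m (h *: c + Gc) +
      (h *: b + Gb) *m commmx (h *: a + Ga) (h *: c + Gc) +
      commmx (h *: b + Gb) (h *: c + Gc) *m (h *: a + Ga)) <=
   2 * ((2 * M * t) * (2 * M * t)) * (2 * M * t) + (2 * M * t) * (2 * ((2 * M * t) * (2 * M * t)))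
   + 2 * ((2 * M * t) * (2 * M * t)) * (2 * M * t).
  apply: mnDb; first apply: mnDb.
  - by apply: mnMb; [apply: mnCb|]; apply: bx.
  - by apply: mnMb; [|apply: mnCb]; apply: bx.
  - by apply: mnMb; [apply: mnCb|]; apply: bx.
have bR : mn Rem <= (2 * ((t * M) * (M * t ^+ 2)) + 2 * ((M * t ^+ 2) * (2 * M * t)))
   + (2 * ((t * M) * (M * t ^+ 2)) + 2 * ((M * t ^+ 2) * (2 * M * t)))
   + (2 * ((t * M) * (M * t ^+ 2)) + 2 * ((M * t ^+ 2) * (2 * M * t))).
  rewrite /Rem; apply: mnDb; first apply: mnDb.
  - by apply: mnDb; apply: mnCb => //; [apply: bha|apply: bx].
  - by apply: mnDb; apply: mnCb => //; [apply: bha|apply: bx].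
  - by apply: mnDb; apply: mnCb => //; [apply: bha|apply: bx].
have := mnB (- (commmx (h *: a + Ga) (h *: b + Gb) *m (h *: c + Gc) +
      (h *: b + Gb) *m commmx (h *: a + Ga) (h *: c + Gc) +
      commmx (h *: b + Gb) (h *: c + Gc) *m (h *: a + Ga))) Rem.
rewrite -hE mnZ Normc.normcM nh mnN => H.
have H2 := le_trans H (lerD bQ bR).
have t20 : 0 < t * t by apply: mulr_gt0.
rewrite -(ler_pM2l t20); apply: le_trans H2 _.
by apply: eqle; ring.
Qed.

Lemma mnBb m l (p q : 'M[C]_(m,l)) P Q : mn p <= P -> mn q <= Q -> mn (p - q) <= P + Q.
Proof. by move=> h1 h2; apply: le_trans (mnB _ _) (lerD h1 h2). Qed.

Lemma hecke_eq (F X x : 'M[C]_n) (q : C) : q != 0 -> F *m F = 1%:M ->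
  X = (1%:M + x) *m F -> (X - q%:M) *m (X + q^-1%:M) = 0 ->
  F *m x + x *m F + x *m F *m x = (q - q^-1) *: (1%:M + x).
Proof.
move=> q0 FF eX H.
rewrite mulmxBl !mulmxDr mul_mx_scalar !mul_scalar_mx scale_scalar_mx mulfV // in H.
have A : X *m X = (q - q^-1) *: X + 1%:M.
  by rewrite scalerBl addrAC -(subr0_eq H) addrK.
have XF : X *m F = 1%:M + x by rewrite eX -mulmxA FF mulmx1.
have B : (1%:M + x) *m F *m (1%:M + x) = (q - q^-1) *: (1%:M + x) + F.
  by rewrite -{1}eX -XF mulmxA A mulmxDl mul1mx -scalemxAl XF.
rewrite mulmxDl mul1mx !mulmxDr !mulmx1 -addrA [in RHS]addrC in B.
move: B; rewrite mulmxDl => /addrI <-.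
by rewrite addrA [x *m F + _]addrC.
Qed.


Lemma hecke_small (F r G : 'M[C]_n) (h d : C) (t M : R) :
  0 < t -> t <= 1 -> nc h = t -> mn r <= M -> mn G <= M * t ^+ 2 ->
  mn F <= M -> mn (1%:M : 'M[C]_n) <= M ->
  nc (d - 2 * h) <= M * t ^+ 2 -> nc d <= M * t ->
  F *m (h *: r + G) + (h *: r + G) *m F + (h *: r + G) *m F *m (h *: r + G)
    = d *: (1%:M + (h *: r + G)) ->
  mn (F *m r + r *m F - 2%:M) <= (5 * M ^+ 2 + 4 * M ^+ 3) * t.
Proof.
move=> t0 t1 nh hr hG hF h1 hd2 hd.
set x := h *: r + G => P.
have M0 : 0 <= M by apply: le_trans (mn_ge0 _) hr.
have tt : M * t ^+ 2 <= M * t.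
  apply: ler_wpM2l => //; rewrite expr2 -[X in _ <= X]mulr1; apply: ler_wpM2l => //.
  exact: ltW.
have bx : mn x <= 2 * M * t.
  apply: le_trans (mnDb (mnZb h hr) (le_trans hG tt)) _.
  by rewrite nh; apply: eqle; ring.
have e1 : F *m x + x *m F = h *: (F *m r + r *m F) + (F *m G + G *m F).
  by rewrite /x mulmxDr mulmxDl -scalemxAr -scalemxAl addrACA -scalerDr.
have e2 : h *: (F *m r + r *m F) = d *: (1%:M + x) - x *m F *m x - (F *m G + G *m F).
  by rewrite -P addrK e1 addrK.
have e3 : h *: (F *m r + r *m F - 2%:M) =
   (d - 2 * h) *: 1%:M + d *: x - x *m F *m x - (F *m G + G *m F).
  have e4 : h *: (2%:M : 'M_n) = (2 * h) *: 1%:M by rewrite !scale_scalar_mx mulr1 mulrC.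
  rewrite scalerBr e2 e4 scalerDr scalerBl.
  set a := d *: (1%:M : 'M_n); set e := (2 * h) *: (1%:M : 'M_n); set b := d *: x.
  set u := x *m F *m x; set Y := F *m G + G *m F.
  by rewrite [LHS]addrAC [a + b - u - e]addrAC [a + b - e]addrAC.
have H : mn (h *: (F *m r + r *m F - 2%:M)) <=
   (M * t ^+ 2) * M + (M * t) * (2 * M * t) + (2 * M * t) * M * (2 * M * t)
   + (M * (M * t ^+ 2) + M * t ^+ 2 * M).
  rewrite e3; apply: mnBb; first apply: mnBb; first apply: mnDb.
  - exact: mnZb2.
  - exact: mnZb2.
  - by apply: mnMb => //; apply: mnMb.
  - by apply: mnDb; apply: mnMb.
rewrite mnZ nh in H.
rewrite -(ler_pM2l t0); apply: le_trans H _.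
by apply: eqle; ring.
Qed.
End Comm.
Section Real.
Variable R : realType.
Local Notation nc := (@Normc.normc R).

Lemma nc_real (a : R) : nc (a%:C)%C = `|a|.
Proof. by rewrite /Normc.normc /= expr0n /= addr0 sqrtr_sqr. Qed.

Lemma re_bound (a b : R) (K : R[i]) : (a%:C <= K * b%:C)%C -> a <= complex.Re K * b.
Proof. by case: K => k1 k2; rewrite lecE /= !mulr0 subr0 => /andP[_]. Qed.

Lemma cR1 (a : R) : ((a%:C) - 1 = (a - 1)%:C)%C.
Proof. by rewrite rmorphB rmorph1. Qed.

Lemma cR2 (a b : R) : ((a%:C) - 2 * (b%:C) = (a - 2 * b)%:C)%C.
Proof. by rewrite rmorphB rmorphM rmorph_nat. Qed.

Lemma pos_real (z : R[i]) : 0 < z -> z = ((complex.Re z)%:C)%C.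
Proof. by case: z => a b; rewrite ltcE /= => /andP[/eqP -> _]. Qed.

Lemma small_zero (x K d : R) : 0 <= x -> 0 < d ->
  (forall t, 0 < t -> t < d -> x <= K * t) -> x = 0.
Proof.
move=> x0 d0 H; apply/eqP; rewrite eq_le x0 andbT; rewrite leNgt; apply/negP => xp.
set A := `|K|.
have A0 : 0 <= A by apply: normr_ge0.
have KA : K <= A by apply: ler_norm.
set s := x / (2 * (A + 1)).
have s0 : 0 < s by apply: divr_gt0 => //; lra.
have ss : s * (2 * (A + 1)) = x by rewrite /s mulfVK //; lra.
set t := Num.min (d / 2) s.
have t0 : 0 < t by rewrite lt_min s0 andbT; lra.
have td2 : t <= d / 2 by rewrite ge_min lexx.
have td : t < d by lra.
have ts : t <= s by rewrite ge_min lexx orbT.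
have := H t t0 td.
have : K * t <= A * t by apply: ler_wpM2r => //; exact: ltW.
have : A * t <= A * s by apply: ler_wpM2l.
nra.
Qed.

Lemma exp_facts (t : R) : 0 < t -> t <= 1/2 ->
  let e := expR t in
  1 < e /\ `|e - 1| <= 2 * t /\ `|e - e^-1 - 2 * t| <= 2 * t ^+ 2 /\ `|e - e^-1| <= 3 * t.
Proof.
move=> t0 t1 e.
have e1 : 1 + t <= e := expR_ge1Dx t.
have e2 : 1 - t <= e^-1 by rewrite -expRN; have := expR_ge1Dx (- t); lra.
have e0 : 0 < e := expR_gt0 t.
have ee : e * e^-1 = 1 by rewrite mulfV // gt_eqF.
have eup : e * (1 - t) <= e * e^-1 by apply: ler_wpM2l => //; exact: ltW.
rewrite ee in eup.
have eub : e <= 1 + 2 * t by nra.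
have e'lb2 : 0 <= e^-1 by rewrite invr_ge0; exact: ltW.
have e'ub : e^-1 * (1 + t) <= e^-1 * e by apply: ler_wpM2l.
rewrite [e^-1 * e]mulrC ee in e'ub.
have e'ub2 : e^-1 <= 1 - t + t ^+ 2 by nra.
split; first lra.
split; first by rewrite ger0_norm; lra.
split; last by rewrite ger0_norm; nra.
rewrite ler_norml; apply/andP; split; nra.
Qed.
End Real.

Section Conj.
Variable R : realType.
Local Notation C := R[i].
Local Notation nc := (@Normc.normc R).
Variable N : nat.
Local Notation n3 := (N * N * N).

Lemma inv_invol m (A : 'M[C]_m) : A *m A = 1%:M -> invmx A = A.
Proof.
move=> h; have [u _] := mulmx1_unit h.
by rewrite -[invmx A]mulmx1 -h mulmxA mulVmx ?mul1mx.
Qed.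

Lemma conj_dec (P Q : 'M[C]_n3) (h : C) (r G : 'M[C]_(N * N)) : P *m Q = 1%:M ->
  P *m leg12 (1%:M + (h *: r + G)) *m Q =
  1%:M + (h *: (P *m leg12 r *m Q) + P *m leg12 G *m Q).
Proof.
move=> PQ; rewrite leg12D leg12_1 leg12D leg12Z mulmxDr mulmx1 mulmxDl PQ.
by rewrite mulmxDr mulmxDl -scalemxAr -scalemxAl.
Qed.

Lemma leg_dec (h : C) (r G : 'M[C]_(N * N)) :
  leg12 (1%:M + (h *: r + G)) = 1%:M + (h *: leg12 r + leg12 G).
Proof. by rewrite leg12D leg12_1 leg12D leg12Z. Qed.
End Conj.

Lemma lam_bound (R : realType) (f g L m B : R) :
  0 <= f -> 0 <= g -> 0 <= L -> 0 <= m -> m <= B ->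
  [/\ L * m <= (1 + f) ^+ 2 * (1 + g) ^+ 2 * (1 + L) * B,
      g * (L * m) * g <= (1 + f) ^+ 2 * (1 + g) ^+ 2 * (1 + L) * B &
      f * g * (L * m) * (g * f) <= (1 + f) ^+ 2 * (1 + g) ^+ 2 * (1 + L) * B].
Proof.
move=> f0 g0 L0 m0 mB.
have B0 : 0 <= B by apply: le_trans mB.
have f1 : 1 <= (1 + f) ^+ 2 by nra.
have g1 : 1 <= (1 + g) ^+ 2 by nra.
have fg1 : 1 <= (1 + f) ^+ 2 * (1 + g) ^+ 2 by nra.
have LmB : L * m <= (1 + L) * B by nra.
have LmB0 : 0 <= L * m by apply: mulr_ge0.
split.
- apply: le_trans LmB _; rewrite -mulrA -[X in X <= _]mul1r.
  by apply: ler_wpM2r => //; apply: mulr_ge0 => //; lra.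
- have gg : g * g <= (1 + f) ^+ 2 * (1 + g) ^+ 2 by nra.
  have := ler_pM (mulr_ge0 g0 g0) LmB0 gg LmB.
  move=> H; apply: le_trans _ (le_trans H _).
    by apply: eqle; ring.
  by apply: eqle; ring.
- have gg : f * g * (g * f) <= (1 + f) ^+ 2 * (1 + g) ^+ 2.
    have : f * g <= (1 + f) * (1 + g) by nra.
    have : 0 <= f * g by apply: mulr_ge0.
    nra.
  have := ler_pM (mulr_ge0 (mulr_ge0 f0 g0) (mulr_ge0 g0 f0)) LmB0 gg LmB.
  move=> H; apply: le_trans _ (le_trans H _).
    by apply: eqle; ring.
  by apply: eqle; ring.
Qed.

Unset Implicit Arguments.
Set Strict Implicit.

Theorem mainTheorem1 (R : realType) (N : nat)
    (F : 'M[R[i]]_(N * N)) (Rq : R[i] -> 'M[R[i]]_(N * N)) (rho : R[i])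
    (r : 'M[R[i]]_(N * N)) :
  involutive_symmetry F ->
  0 < rho ->
  analytic_on_disc Rq 1 rho ->
  (forall q : R[i], `|q - 1| < rho -> q != 0 -> q != 1 -> q != -1 ->
     hecke_symmetry q (Rq q)) ->
  (forall q : R[i], `|q - 1| < rho -> q != 0 -> compatible (Rq q) F) ->
  Rq 1 = F ->
  bigO_h2 (fun h : R[i] => Rq (expC h) *m F - 1%:M - h *: r) ->
  r + ov21 F r = 2%:R *: F /\
  commmx (ov12 F r) (ov13 F r) + commmx (ov12 F r) (ov23 F r)
    + commmx (ov13 F r) (ov23 F r) = 0.
Proof.
move=> [[_ Fbr] FF] rho0 _ hec comp _ [K [delta [delta0 hO]]].
have [rr erho rr0] : exists2 rr : R, rho = (rr%:C)%C & 0 < rr.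
  exists (complex.Re rho); last by move: rho0; rewrite ltcE => /andP[].
  exact: pos_real.
have [dd edelta dd0] : exists2 dd : R, delta = (dd%:C)%C & 0 < dd.
  exists (complex.Re delta); last by move: delta0; rewrite ltcE => /andP[].
  exact: pos_real.
set kk := complex.Re K.
set L : R := (N * N * N * (N * N * N))%:R.
set f12 := mn (leg12 F); set f23 := mn (leg23 F).
set Lam := (1 + f12) ^+ 2 * (1 + f23) ^+ 2 * (1 + L).
set MH := 3 + mn r + mn F + mn (1%:M : 'M[R[i]]_(N * N)) + `|(N * N * (N * N))%:R * kk|.
set MY := Lam * MH.
set t0 := Num.min (1 / 2) (Num.min (rr / 4) dd).
have FF12 : leg12 F *m leg12 F = 1%:M by rewrite -leg12M FF leg12_1.
have FF23 : leg23 F *m leg23 F = 1%:M by rewrite -leg23M FF leg23_1.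
have i12 := inv_invol FF12; have i23 := inv_invol FF23.
have key : forall t : R, 0 < t -> t < t0 ->
   mn (F *m r + r *m F - 2%:M) <= (5 * MH ^+ 2 + 4 * MH ^+ 3) * t /\
   mn (cyb (ov12 F r) (ov13 F r) (ov23 F r)) <= (48 * MY ^+ 3 + 18 * MY ^+ 2) * t.

  move=> t tp; rewrite /t0 !lt_min => /and3P[t1 t2 t3].
  have t1' : t <= 1 / 2 by exact: ltW.
  set h := (t%:C)%C.
  have nh : Normc.normc h = t by rewrite nc_real ger0_norm // ltW.
  have [e1 [ee1 [ee2 ee3]]] := exp_facts tp t1'.
  set e := expR t in e1 ee1 ee2 ee3.
  have eq_q : expC h = (e%:C)%C by rewrite /expC /= cos0 sin0 mulr1 mulr0.
  have hq1 : `|expC h - 1| < rho.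
    rewrite eq_q erho normC_nc ltcR cR1 nc_real; lra.
  have q0 : expC h != 0.
    by rewrite eq_q; apply/eqP => /(congr1 (@complex.Re R)) /=; lra.
  have q1 : expC h != 1.
    by rewrite eq_q; apply/eqP => /(congr1 (@complex.Re R)) /=; lra.
  have qm1 : expC h != -1.
    by rewrite eq_q; apply/eqP => /(congr1 (@complex.Re R)) /=; lra.
  have [[_ Xbr] [_ [_ Hk]]] := hec _ hq1 q0 q1 qm1.
  have [c1 c2] := comp _ hq1 q0.
  have hO' := hO h.
  set q := expC h in Xbr Hk c1 c2 hO' eq_q q0.
  set X := Rq q in Xbr Hk c1 c2 hO'.
  set G := X *m F - 1%:M - h *: r.
  have MHr : mn r <= MH by rewrite /MH; have := mn_ge0 F; have := mn_ge0 (1%:M : 'M[R[i]]_(N * N)); have := normr_ge0 ((N * N * (N * N))%:R * kk); lra.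
  have MHF : mn F <= MH by rewrite /MH; have := mn_ge0 r; have := mn_ge0 (1%:M : 'M[R[i]]_(N * N)); have := normr_ge0 ((N * N * (N * N))%:R * kk); lra.
  have MH1 : mn (1%:M : 'M[R[i]]_(N * N)) <= MH by rewrite /MH; have := mn_ge0 r; have := mn_ge0 F; have := normr_ge0 ((N * N * (N * N))%:R * kk); lra.
  have MH3 : 3 <= MH by rewrite /MH; have := mn_ge0 r; have := mn_ge0 F; have := mn_ge0 (1%:M : 'M[R[i]]_(N * N)); have := normr_ge0 ((N * N * (N * N))%:R * kk); lra.
  have MHk : (N * N * (N * N))%:R * kk <= MH.
    apply: le_trans (ler_norm _) _; rewrite /MH; have := mn_ge0 r; have := mn_ge0 F; have := mn_ge0 (1%:M : 'M[R[i]]_(N * N)); lra.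
  have hb : forall i0 j0, Normc.normc (G i0 j0) <= kk * t ^+ 2.
    move=> i0 j0; have := hO'; rewrite normC_nc nh edelta ltcR => /(_ t3 i0 j0).
    by rewrite normC_nc -rmorphXn => /re_bound.
  have hG : mn G <= MH * t ^+ 2.
    apply: le_trans (mn_bound hb) _.
    rewrite mulrA; apply: ler_wpM2r; [exact: sqr_ge0 | exact: MHk].
  have eRc : X *m F = 1%:M + (h *: r + G) by rewrite /G [h *: r + _]addrC subrK addrC subrK.
  have eX : X = (1%:M + (h *: r + G)) *m F by rewrite -eRc -mulmxA FF mulmx1.
  split.
    have P := hecke_eq q0 FF eX Hk.
    have ed : q - q^-1 = ((e - e^-1)%:C)%C by rewrite eq_q -fmorphV rmorphB.
    rewrite ed in P.
    apply: (hecke_small tp _ nh MHr hG MHF MH1 _ _ P); first lra.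
      rewrite /h cR2 nc_real.
      apply: le_trans ee2 _; apply: ler_wpM2r => //; [apply: sqr_ge0|lra].
    by rewrite nc_real; apply: le_trans ee3 _; apply: ler_wpM2r; [exact: ltW|lra].
  have Y' := ybe_abs FF12 FF23 Fbr Xbr c1 c2.
  have PQ2 : (leg12 F *m leg23 F) *m (leg23 F *m leg12 F) = 1%:M.
    by rewrite mulmxA -[leg12 F *m _ *m _]mulmxA FF23 mulmx1 FF12.
  rewrite -!leg12M eRc !conj_dec // leg_dec in Y'.
  have L0 : 0 <= L by rewrite /L ler0n.
  have [b1 b2 b3] := lam_bound (mn_ge0 (leg12 F)) (mn_ge0 (leg23 F)) L0 (mn_ge0 r) MHr.
  have [g1 g2 g3] := lam_bound (mn_ge0 (leg12 F)) (mn_ge0 (leg23 F)) L0 (mn_ge0 G) hG.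
  have H := cyb_small tp _ nh _ _ _ _ _ _ Y'.
  rewrite /cyb /ov13 /ov23 i12 i23 -[_ *m leg23 F *m leg12 F]mulmxA.
  have l12 := lexx (mn (leg12 F)); have l23 := lexx (mn (leg23 F)).
  apply: H; first lra.
  - exact: le_trans (mn_leg12 r) b1.
  - by apply: le_trans _ b2; apply: (mnMb _ l23); apply: (mnMb l23 (mn_leg12 r)).
  - apply: le_trans _ b3; apply: mnMb; last exact: (mnMb l23 l12).
    by apply: (mnMb _ (mn_leg12 r)); apply: (mnMb l12 l23).
  - rewrite /MY -[Lam * MH * t ^+ 2]mulrA; exact: le_trans (mn_leg12 G) g1.
  - rewrite /MY -[Lam * MH * t ^+ 2]mulrA.
    by apply: le_trans _ g2; apply: (mnMb _ l23); apply: (mnMb l23 (mn_leg12 G)).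
  - rewrite /MY -[Lam * MH * t ^+ 2]mulrA.
    apply: le_trans _ g3; apply: mnMb; last exact: (mnMb l23 l12).
    by apply: (mnMb _ (mn_leg12 G)); apply: (mnMb l12 l23).
have t0p : 0 < t0 by rewrite /t0 !lt_min; apply/and3P; split; lra.
split.
  have S0 : F *m r + r *m F - 2%:M = 0.
    apply: mn0; apply: (small_zero (mn_ge0 _) t0p) => t ht1 ht2.
    exact: (key t ht1 ht2).1.
  have E := subr0_eq S0.
  rewrite /ov21 -mul_scalar_mx -E mulmxDl -[r *m F *m F]mulmxA FF mulmx1 addrC.
  by [].
apply: mn0; apply: (small_zero (mn_ge0 _) t0p) => t ht1 ht2.
exact: (key t ht1 ht2).2.
Qed.
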